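(* Consider the queueing system in the context under MaxWeight with a diagonal matrix $\Delta$ with positive diagonal entries, in overload ($\rho\notin\mathcal{P}$). Let $H=\limsup_{t\to\infty}\langle \frac{X(t)}{t},\Delta\frac{X(t)}{t}\rangle$ and let $\eta$ be the limit of $X(t_c)/t_c$ along an increasing unbounded sequence $\{t_c\}$ with $\langle\eta,\Delta\eta\rangle=H$. Then for any increasing unbounded sequence $\{t_m\}$ with $\lim_{m\to\infty}X(t_m)/t_m=\mu$, $$\langle\mu,\Delta\eta\rangle\ge\langle\eta,\Delta\eta\rangle\implies \mu=\eta.$$
   Context: Model: $Q$ queues, finite set $\mathcal{S}=\{S_1,\dots,S_N\}\subset\mathbb{R}^Q_{\ge0}$, discrete time. Arrivals $A(t)$ with $0\le A_q(t)\le\bar A_q<\infty$ and $\rho_q=\lim_{t\to\infty}\frac1t\sum_{s=0}^{t-1}A_q(s)\in(0,\infty)$. Departures $D_q(t)=\min\{S_q(t),X_q(t)\}$, $X(t+1)=X(t)+A(t)-D(t)$, $X(0)=0$, with $S(t)\in\arg\max_{S\in\mathcal{S}}\langle S,\Delta X(t)\rangle$. Stability region $\mathcal{P}=\{r\in\mathbb{R}^Q_{\ge0}: r\le\sum_n\alpha_nS_n\text{ for some }\alpha_n\ge0,\sum_n\alpha_n=1\}$. *)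

(* Defs.v *)
From HB Require Import structures.
From mathcomp Require Import all_boot all_order all_algebra.
From mathcomp Require Import all_classical all_reals all_analysis.
Set Implicit Arguments. Unset Strict Implicit. Unset Printing Implicit Defensive.
Import Order.TTheory GRing.Theory Num.Theory.
Import numFieldNormedType.Exports.
Local Open Scope classical_set_scope.
Local Open Scope ring_scope.

(* Weighted inner product <x, Delta y> for Delta = diag(delta). *)
Definition dinner (R : realType) (Q : nat) (delta : 'I_Q -> R)
  (x y : 'I_Q -> R) : R := \sum_(q < Q) x q * (delta q * y q).

Definition stab_region (R : realType) (Q N : nat) (Svec : 'I_N -> 'I_Q -> R)
  (r : 'I_Q -> R) : Prop :=
  (forall q, 0 <= r q) /\
  exists alpha : 'I_N -> R,
    (forall n, 0 <= alpha n) /\ \sum_(n < N) alpha n = 1 /\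
    forall q, r q <= \sum_(n < N) alpha n * Svec n q.

(* MaxWeight queueing dynamics: X is the queue process, A the arrivals,
   sched t the index of the schedule S(t) = Svec (sched t) chosen at time t. *)
Definition maxweight_dynamics (R : realType) (Q N : nat)
  (Svec : 'I_N -> 'I_Q -> R) (delta : 'I_Q -> R)
  (A X : nat -> 'I_Q -> R) (sched : nat -> 'I_N) : Prop :=
  (forall q, X 0%N q = 0) /\
  (forall t n, dinner delta (Svec n) (X t) <= dinner delta (Svec (sched t)) (X t)) /\
  (forall t q, X t.+1 q = X t q + A t q - Num.min (Svec (sched t) q) (X t q)).

Definition scaled (R : realType) (Q : nat) (X : nat -> 'I_Q -> R) (t : nat)
  : 'I_Q -> R := fun q => X t q / t%:R.

Definition scaled_limit (R : realType) (Q : nat) (X : nat -> 'I_Q -> R)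
  (tm : nat -> nat) (mu : 'I_Q -> R) : Prop :=
  forall q, (fun m => scaled X (tm m) q) @ \oo --> mu q.

Definition incr_unbounded (tm : nat -> nat) : Prop :=
  (forall m, (tm m < tm m.+1)%N) /\ (forall M, exists m, (M <= tm m)%N).

(* Main.v *)
Require Import Defs.
From HB Require Import structures.
From mathcomp Require Import all_boot all_order all_algebra.
From mathcomp Require Import all_classical all_reals all_analysis.
From mathcomp Require Import ring lra.
Import Order.TTheory GRing.Theory Num.Theory.
Import numFieldNormedType.Exports.
Local Open Scope classical_set_scope.
Local Open Scope ring_scope.

Lemma cvg_bigsum (R : realType) (J : Type) (r : seq J) (f : J -> nat -> R)
  (l : J -> R) : (forall j, f j @ \oo --> l j) ->
  (fun n => \sum_(j <- r) f j n) @ \oo --> \sum_(j <- r) l j.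
Proof.
move=> fl; elim: r => [|x r IH].
  under eq_fun do rewrite big_nil. rewrite big_nil; exact: cvg_cst.
under eq_fun do rewrite big_cons. rewrite big_cons.
exact: cvgD.
Qed.

Lemma tm_ge (tm : nat -> nat) : (forall m, (tm m < tm m.+1)%N) ->
  forall m, (m <= tm m)%N.
Proof.
move=> H; elim=> [|m IH]; first exact: leq0n. exact: leq_ltn_trans IH (H m).
Qed.

Lemma dinnerC (R : realType) Q (delta : 'I_Q -> R) x y :
  dinner delta x y = dinner delta y x.
Proof. by apply: eq_bigr => q _; ring. Qed.

Theorem lemma5 (R : realType) (Q N : nat)
  (Svec : 'I_N -> 'I_Q -> R) (delta : 'I_Q -> R)
  (A : nat -> 'I_Q -> R) (Abar rho : 'I_Q -> R)
  (X : nat -> 'I_Q -> R) (sched : nat -> 'I_N)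
  (tc tm : nat -> nat) (eta mu : 'I_Q -> R) :
  (forall n q, 0 <= Svec n q) ->
  (forall q, 0 < delta q) ->
  (forall t q, 0 <= A t q <= Abar q) ->
  (forall q, (fun t => (\sum_(s < t) A s q) / t%:R) @ \oo --> rho q) ->
  (forall q, 0 < rho q) ->
  maxweight_dynamics Svec delta A X sched ->
  ~ stab_region Svec rho ->
  incr_unbounded tc ->
  scaled_limit X tc eta ->
  ((dinner delta eta eta)%:E =
     limn_esup (fun t => (dinner delta (scaled X t) (scaled X t))%:E))%E ->
  incr_unbounded tm ->
  scaled_limit X tm mu ->
  dinner delta mu eta >= dinner delta eta eta ->
  mu = eta.
Proof.
move=> _ dpos _ _ _ _ _ _ _ HH [tminc _] Hmu Hge.
set g := fun t => dinner delta (scaled X t) (scaled X t).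
have cg : (fun m => g (tm m)) @ \oo --> dinner delta mu mu.
  apply: cvg_bigsum => q; apply: cvgM; first exact: Hmu.
  apply: cvgM; [exact: cvg_cst | exact: Hmu].
have cgE : (fun m => (g (tm m))%:E) @ \oo --> (dinner delta mu mu)%:E.
  apply: cvg_EFin; first exact: nearW.
  exact: cg.
have Hes : forall n, ((dinner delta mu mu)%:E <= esups (fun t => (g t)%:E) n)%E.
  move=> n; apply: (cvge_le _ cgE); near=> m.
  apply: ereal_sup_ubound; exists (tm m) => //=.
  apply: (@leq_trans m); last exact: tm_ge. near: m; exists n => //.
have Hmm : dinner delta mu mu <= dinner delta eta eta.
  rewrite -lee_fin HH limn_esup_lim; apply: lime_ge; first exact: is_cvg_esups.
  exact: nearW.
set d := fun q => mu q - eta q.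
have Hd : dinner delta d d <= 0.
  have -> : dinner delta d d = dinner delta mu mu - 2 * dinner delta mu eta + dinner delta eta eta.
    rewrite /dinner /d mulr_sumr -sumrN -!big_split /=.
    by apply: eq_bigr => q _; ring.
  lra.
have Hd0 : forall q, 0 <= d q * (delta q * d q).
  move=> q; rewrite mulrCA; apply: mulr_ge0; [exact: ltW | rewrite -expr2; exact: sqr_ge0].
have Hz : dinner delta d d = 0.
  apply/eqP; rewrite eq_le Hd /=; exact: sumr_ge0.
apply/funext => q.
have := Hz; rewrite /dinner => /eqP; rewrite psumr_eq0 // => /allP /(_ q).
rewrite mem_index_enum => /(_ isT) /eqP.
rewrite mulrCA => /eqP; rewrite mulf_eq0 (gt_eqF (dpos q)) /= mulf_eq0 orbb subr_eq0.
by move/eqP.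
Unshelve. all: by end_near.
Qed.
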